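(* Let $a,c>0$ and $b,d<0$ be real numbers, and let $W_0(z)=1$, $W_1(z)=z$, $W_n(z)=(az+b)W_{n-1}(z)+(cz+d)W_{n-2}(z)$ for $n\ge2$. Then every polynomial $W_n(z)$, $n\ge0$, is real-rooted if and only if $-b/a\le -d/c$.
   Context: A polynomial is real-rooted if all its zeros are real. *)

(* Defs.v *)
From HB Require Import structures.
From mathcomp Require Import all_boot all_order all_algebra.
Set Implicit Arguments. Unset Strict Implicit. Unset Printing Implicit Defensive.
Import Order.TTheory GRing.Theory Num.Theory.
Local Open Scope ring_scope.

Fixpoint Wpair (C : numClosedFieldType) (a b c d : C) (n : nat)
  : {poly C} * {poly C} :=
  match n with
  | 0%N => (1, 'X)
  | n'.+1 =>
      let: (p, q) := Wpair a b c d n' in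
      (q, (a *: 'X + b%:P) * q + (c *: 'X + d%:P) * p)
  end.

Definition W (C : numClosedFieldType) (a b c d : C) (n : nat) : {poly C} :=
  (Wpair a b c d n).1.

Definition real_rooted (C : numClosedFieldType) (p : {poly C}) : Prop :=
  forall z : C, root p z -> z \is Num.real.

(* Main.v *)
Require Import Defs.
From HB Require Import structures.
From mathcomp Require Import all_boot all_order all_algebra.
From mathcomp Require Import ring.
Import Order.TTheory GRing.Theory Num.Theory.
Set Implicit Arguments. Unset Strict Implicit. Unset Printing Implicit Defensive.
Local Open Scope ring_scope.

Section Basic.
Variables (C : numClosedFieldType) (a b c d : C).

Lemma W0 : W a b c d 0 = 1. Proof. by []. Qed.
Lemma W1 : W a b c d 1 = 'X. Proof. by []. Qed.
Lemma W_SS n : W a b c d n.+2 =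
  (a *: 'X + b%:P) * W a b c d n.+1 + (c *: 'X + d%:P) * W a b c d n.
Proof.
rewrite /W /=; case: (Wpair a b c d n) => p q /=. by [].
Qed.

Lemma W_ind (P : nat -> Prop) : P 0%N -> P 1%N ->
  (forall n, P n -> P n.+1 -> P n.+2) -> forall n, P n.
Proof.
move=> P0 P1 PS n; suff: P n /\ P n.+1 by case.
by elim: n => [|n [IH1 IH2]]; split => //; apply: PS.
Qed.

Lemma W_horner_SS n z : (W a b c d n.+2).[z] =
  (a * z + b) * (W a b c d n.+1).[z] + (c * z + d) * (W a b c d n).[z].
Proof. by rewrite W_SS !hornerE. Qed.

Hypotheses (ha : a \is Num.real) (hb : b \is Num.real)
  (hc : c \is Num.real) (hd : d \is Num.real).

Lemma W_conj n z : (W a b c d n).[z^*] = ((W a b c d n).[z])^*.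
Proof.
move: n; apply: W_ind => [|| n IH1 IH2]; first by rewrite W0 !hornerE rmorph1.
  by rewrite W1 !hornerE.
rewrite !W_horner_SS IH1 IH2 rmorphD !rmorphM !rmorphD !rmorphM.
by rewrite /= (conj_Creal ha) (conj_Creal hb) (conj_Creal hc) (conj_Creal hd).
Qed.

End Basic.

Notation W_SS' := W_SS.
Section Sset.
Variable (C : numClosedFieldType).
Definition inS (mu w : C) := 0 < 'Im w /\ 'Im (mu^* * w) < 0.

Lemma Im_pos_neq0 {w : C} : 0 < 'Im w -> w != 0.
Proof. by apply: contraTneq => ->; rewrite raddf0 ltxx. Qed.

Lemma S_inv mu w : 0 < 'Im mu -> inS mu w -> inS mu (mu / w).
Proof.
move=> hmu [h1 h2]; have w0 := Im_pos_neq0 h1.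
have mu0 := Im_pos_neq0 hmu.
have nw2 : 0 < `|w| ^+ 2 by apply: exprn_gt0; rewrite normr_gt0.
have nw : 0 < `|w| ^- 2 by rewrite invr_gt0.
have nwR : `|w| ^- 2 \is Num.real by apply: gtr0_real.
split.
  rewrite invC_norm mulrCA ImMl //.
  apply: mulr_gt0 => //.
  have -> : mu * w^* = (mu^* * w)^* by rewrite rmorphM /= conjCK.
  by rewrite Im_conj oppr_gt0.
rewrite mulrA (mulrC _ mu) -normCK ImMl ?rpredX ?normr_real //.
have nmu2 : 0 < `|mu| ^+ 2 by apply: exprn_gt0; rewrite normr_gt0.
rewrite ImV mulrA pmulr_llt0 //.
by rewrite mulrN oppr_lt0 mulr_gt0.
Qed.

Lemma S_add mu w k : 0 < 'Im mu -> 0 < k -> inS mu w -> inS mu (mu + k * w).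
Proof.
move=> hmu hk [h1 h2]; have kR : k \is Num.real by apply: gtr0_real.
split; first by rewrite raddfD /= ImMl // addr_gt0 // mulr_gt0.
rewrite mulrDr raddfD /=.
have -> : 'Im (mu^* * mu) = 0.
  by apply/Creal_ImP; rewrite mulrC -normCK rpredX // normr_real.
by rewrite add0r mulrCA ImMl // pmulr_rlt0.
Qed.

Lemma S_shift mu w e : 0 < 'Im mu -> 0 <= e -> inS mu w -> inS mu (w + e).
Proof.
move=> hmu he [h1 h2]; have eR : e \is Num.real by apply: ger0_real.
have Ie : 'Im e = 0 by apply/Creal_ImP.
split; first by rewrite raddfD /= Ie addr0.
rewrite mulrDr raddfD /= [_ * e]mulrC (ImMl eR) Im_conj.
rewrite mulrN subr_lt0; apply: (lt_le_trans h2).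
by rewrite mulr_ge0 // ltW.
Qed.

End Sset.

Section Suff.
Variables (C : numClosedFieldType) (a b c d : C).
Hypotheses (ha : a \is Num.real) (hb : b \is Num.real)
  (hc : c \is Num.real) (hd : d \is Num.real)
  (ha0 : 0 < a) (hc0 : 0 < c) (hd0 : d < 0).
Hypothesis hrs : - b / a <= - d / c.

Lemma W_nonreal z : 0 < 'Im z -> forall n, (W a b c d n).[z] != 0.
Proof.
move=> hz.
have a0 : a != 0 by rewrite gt_eqF.
have c0 : c != 0 by rewrite gt_eqF.
set s := - d / c; set r := - b / a.
have sR : s \is Num.real by rewrite rpredM ?rpredV ?rpredN.
have s0 : 0 < s by rewrite /s mulr_gt0 ?oppr_gt0 ?invr_gt0.
have Is : 'Im s = 0 by apply/Creal_ImP.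
pose mu := a * (z - s); pose eps := a * (s - r); pose k := c / a.
have aR : a \is Num.real by [].
have hmu : 0 < 'Im mu by rewrite /mu (ImMl aR) raddfB /= Is subr0 mulr_gt0.
have heps : 0 <= eps by apply: mulr_ge0; [exact: ltW | rewrite subr_ge0].
have hk : 0 < k by rewrite /k mulr_gt0 ?invr_gt0.
have hA : a * z + b = mu + eps.
  by rewrite /mu /eps /s /r; field; rewrite ?a0 ?c0.
have hC : c * z + d = k * mu.
  by rewrite /mu /k /s; field; rewrite ?a0 ?c0.
suff H : forall n, (W a b c d n).[z] != 0 /\
    inS mu ((W a b c d n.+1).[z] / (W a b c d n).[z]) by move=> n; case: (H n).
elim=> [|n [IH1 IH2]].
  rewrite W0 W1 !hornerE divr1; split; first exact: oner_neq0.
  split => //.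
  rewrite /mu rmorphM /= (conj_Creal aR) -mulrA (ImMl aR) pmulr_rlt0 //.
  rewrite rmorphB /= (conj_Creal sR) mulrBl raddfB /= mulrC -normCK.
  have -> : 'Im (`|z| ^+ 2) = 0 by apply/Creal_ImP; rewrite rpredX // normr_real.
  by rewrite (ImMl sR) sub0r oppr_lt0 mulr_gt0.
have hW1 : (W a b c d n.+1).[z] != 0.
  have := Im_pos_neq0 IH2.1.
  by rewrite mulf_eq0 negb_or => /andP[].
split => //.
set w0 := (W a b c d n).[z] in IH1 IH2 *; set w1 := (W a b c d n.+1).[z] in IH2 hW1 *.
rewrite W_horner_SS hA hC -/w0 -/w1.
have -> : ((mu + eps) * w1 + k * mu * w0) / w1 = (mu + k * (mu / (w1 / w0))) + eps.
  by field; rewrite IH1 hW1.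
apply: S_shift => //; apply: S_add => //.
exact: S_inv.
Qed.

Lemma suff_rr n : real_rooted (W a b c d n).
Proof.
move=> z /rootP hz.
have IR := Creal_Im z.
case: (real_ltgtP IR (real0 _)) => h.
- have h' : 0 < 'Im z^* by rewrite Im_conj oppr_gt0.
  have := W_nonreal h' n.
  by rewrite W_conj // hz rmorph0 eqxx.
- by have := W_nonreal h n; rewrite hz eqxx.
- by apply/Creal_ImP.
Qed.

End Suff.

Section ProdList.
Variable C : numFieldType.
Definition PhiQ (Q : {poly C}) :=
  Q`_1 ^+ 2 * Q`_2 + 3 * Q`_0 * Q`_1 * Q`_3 - 4 * Q`_0 * Q`_2 ^+ 2.

Lemma prod_inv (ts : seq C) : (forall t, t \in ts -> 0 < t) ->
  exists P1 P2 P3 : C,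
  let Q := \prod_(t <- ts) ('X + t%:P) in
  [/\ 0 < Q`_0, Q`_1 = Q`_0 * P1, Q`_2 = Q`_0 * (P1 ^+ 2 - P2) / 2,
     Q`_3 = Q`_0 * (P1 ^+ 3 - 3 * P1 * P2 + 2 * P3) / 6 &
     (0 <= P1 * P3 - P2 ^+ 2 /\
     forall v, v \is Num.real -> 0 <= P3 - 2 * v * P2 + v ^+ 2 * P1)].
Proof.
elim: ts => [|t ts IH] ht.
  exists 0, 0, 0; cbv zeta; rewrite big_nil !coef1 /=; split; rewrite ?ltr01 //; try by field.
  split; first by rewrite mulr0 expr0n /= subr0 lexx.
  by move=> v _; rewrite !mulr0 subr0 addr0 lexx.
have t0 : 0 < t by apply: ht; rewrite mem_head.
have tn0 : t != 0 by rewrite gt_eqF.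
have [P1 [P2 [P3 /= [h0 h1 h2 h3 [h4 h5]]]]] := IH (fun x hx => ht x (@mem_behead _ (t :: ts) x hx)).
set Q := \prod_(_ <- _) _ in h0 h1 h2 h3 h4 h5.
set u := t^-1.
have u0 : 0 < u by rewrite invr_gt0.
have uR : u \is Num.real by apply: gtr0_real.
exists (P1 + u), (P2 + u ^+ 2), (P3 + u ^+ 3); cbv zeta.
rewrite big_cons -/Q !(mulrDl, coefD, coefXM, coefCM) /=.
split.
- by rewrite add0r mulr_gt0.
- by rewrite h1 /u; field.
- by rewrite h1 h2 /u; field.
- by rewrite h2 h3 /u; field.
split.
- have -> : P1 * (P3 + u ^+ 3) + u * (P3 + u ^+ 3) - (P2 + u ^+ 2) ^+ 2 =
      (P1 * P3 - P2 ^+ 2) + u * (P3 - 2 * u * P2 + u ^+ 2 * P1) by ring.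
  apply: addr_ge0 => //; apply: mulr_ge0; [exact: ltW | exact: h5].
- move=> v vR.
  have -> : P3 + u ^+ 3 - 2 * v * (P2 + u ^+ 2) + v ^+ 2 * (P1 + u) =
      (P3 - 2 * v * P2 + v ^+ 2 * P1) + u * (u - v) ^+ 2 by ring.
  apply: addr_ge0; first exact: h5.
  apply: mulr_ge0; first exact: ltW.
  by apply: real_exprn_even_ge0 => //; apply: realB.
Qed.

Lemma prod_Phi (ts : seq C) : (forall t, t \in ts -> 0 < t) ->
  let Q := \prod_(t <- ts) ('X + t%:P) in 0 < Q`_0 /\ 0 <= PhiQ Q.
Proof.
move=> /prod_inv [P1 [P2 [P3 /= [h0 h1 h2 h3 [h4 h5]]]]]; split => //.
have -> : PhiQ (\prod_(t <- ts) ('X + t%:P)) =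
   (\prod_(t <- ts) ('X + t%:P))`_0 ^+ 3 * (P1 * P3 - P2 ^+ 2).
  by rewrite /PhiQ h1 h2 h3; field.
by apply: mulr_ge0 => //; apply: exprn_ge0; apply: ltW.
Qed.
End ProdList.

Section Evneg.
Variable R : archiNumFieldType.

Lemma lin_neg (p K : R) : p < 0 -> K \is Num.real ->
  exists n : nat, (0 < n)%N /\ p * n%:R + K < 0.
Proof.
move=> hp hK.
have p0 : p != 0 by rewrite lt_eqF.
have np : 0 < - p by rewrite oppr_gt0.
pose x := `|K| / (- p).
have x0 : 0 <= x by rewrite /x divr_ge0 // ltW.
exists (Num.Def.archi_bound x).+1; split => //.
have hx : x < (Num.Def.archi_bound x).+1%:R.
  apply: (lt_le_trans (archi_boundP x0)); rewrite ler_nat; exact: leqnSn.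
set N := _%:R in hx *.
have h1 : `|K| < - p * N.
  have -> : `|K| = - p * x by rewrite /x; field; rewrite ?oppr_eq0 ?p0.
  by rewrite ltr_pM2l.
have h2 : K < - (p * N) by rewrite -mulNr; apply: le_lt_trans h1; apply: real_ler_norm.
have -> : p * N + K = K - (- (p * N)) by rewrite opprK addrC.
by rewrite subr_lt0.
Qed.

Lemma le_norm_pow (p x : R) k j : p \is Num.real -> 1 <= x -> (k <= j)%N ->
  p * x ^+ k <= `|p| * x ^+ j.
Proof.
move=> hp hx hkj.
have x0 : 0 <= x by apply: le_trans hx; exact: ler01.
apply: (le_trans (y := `|p| * x ^+ k)).
  by apply: ler_wpM2r; [exact: exprn_ge0 | exact: real_ler_norm].
by apply: ler_wpM2l => //; exact: ler_weXn2l.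
Qed.

Lemma quad_neg (p2 p1 p0 : R) : p2 < 0 -> p1 \is Num.real -> p0 \is Num.real ->
  exists n : nat, (0 < n)%N /\ p2 * n%:R ^+ 2 + p1 * n%:R + p0 < 0.
Proof.
move=> h2 h1 h0.
have [n [n0 hn]] := lin_neg (K := `|p1| + `|p0|) h2 (realD (normr_real _) (normr_real _)).
exists n; split => //.
have x1 : 1 <= n%:R :> R by rewrite ler1n.
have x0 : 0 < n%:R :> R by apply: lt_le_trans x1; exact: ltr01.
apply: (le_lt_trans (y := n%:R * (p2 * n%:R + (`|p1| + `|p0|)))).
  have -> : n%:R * (p2 * n%:R + (`|p1| + `|p0|)) =
      p2 * n%:R ^+ 2 + `|p1| * n%:R + `|p0| * n%:R by ring.
  rewrite lerD // ?lerD //.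
  - by have := le_norm_pow h1 x1 (isT : (1 <= 1)%N); rewrite !expr1.
  - by have := le_norm_pow h0 x1 (isT : (0 <= 1)%N); rewrite expr0 mulr1 expr1.
by rewrite pmulr_rlt0.
Qed.

Lemma cubic_neg (p3 p2 p1 p0 : R) : p3 < 0 -> p2 \is Num.real -> p1 \is Num.real ->
  p0 \is Num.real ->
  exists n : nat, (0 < n)%N /\ p3 * n%:R ^+ 3 + p2 * n%:R ^+ 2 + p1 * n%:R + p0 < 0.
Proof.
move=> h3 h2 h1 h0.
have [n [n0 hn]] := lin_neg (K := `|p2| + `|p1| + `|p0|) h3
  (realD (realD (normr_real _) (normr_real _)) (normr_real _)).
exists n; split => //.
have x1 : 1 <= n%:R :> R by rewrite ler1n.
have x0 : 0 < n%:R :> R by apply: lt_le_trans x1; exact: ltr01.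
apply: (le_lt_trans (y := n%:R ^+ 2 * (p3 * n%:R + (`|p2| + `|p1| + `|p0|)))).
  have -> : n%:R ^+ 2 * (p3 * n%:R + (`|p2| + `|p1| + `|p0|)) =
      p3 * n%:R ^+ 3 + `|p2| * n%:R ^+ 2 + `|p1| * n%:R ^+ 2 + `|p0| * n%:R ^+ 2 by ring.
  rewrite lerD // ?lerD //.
  - by apply: le_norm_pow.
  - by have := le_norm_pow h1 x1 (isT : (1 <= 2)%N); rewrite !expr1.
  - by have := le_norm_pow h0 x1 (isT : (0 <= 2)%N); rewrite expr0 mulr1.
by rewrite pmulr_rlt0 // exprn_gt0.
Qed.
End Evneg.

Section Nec.
Variables (C : archiClosedFieldType) (a b c d : C).
Hypotheses (ha : a \is Num.real) (hb : b \is Num.real)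
  (hc : c \is Num.real) (hd : d \is Num.real)
  (ha0 : 0 < a) (hc0 : 0 < c) (hb0 : b < 0) (hd0 : d < 0).

Local Notation r := (- b / a).
Local Notation B := (c * r + d).
Let a0 : a != 0. Proof. by rewrite gt_eqF. Qed.
Let c0 : c != 0. Proof. by rewrite gt_eqF. Qed.
Ltac realt0 := repeat first [ assumption | apply: realD | apply: realB | apply: realM
  | apply: realX | rewrite realN | rewrite realV | apply: realn | apply: real0 | apply: real1 ].
Let rR : r \is Num.real. Proof. by realt0. Qed.
Let r0 : 0 < r. Proof. by rewrite mulr_gt0 ?oppr_gt0 ?invr_gt0. Qed.
Let BR : B \is Num.real. Proof. realt0; exact: rR. Qed.
Local Ltac realt := repeat first [ assumption | exact: rR | exact: BR | apply: realD | apply: realB | apply: realM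
  | apply: realX | rewrite realN | rewrite realV | apply: realn | apply: real0 | apply: real1 ].
Let har : a * r + b = 0. Proof. by field; rewrite ?a0. Qed.

Definition Sh n := W a b c d n \Po ('X + r%:P).
Definition e k n := (Sh n)`_k.

Lemma Sh_SS n : Sh n.+2 = (a *: 'X) * Sh n.+1 + (B%:P + c *: 'X) * Sh n.
Proof.
rewrite /Sh W_SS' comp_polyD !comp_polyM !comp_polyD !comp_polyZ comp_polyX !comp_polyC.
congr (_ * _ + _ * _).
  by rewrite scalerDr -addrA -[a *: r%:P]mul_polyC -polyCM -polyCD har addr0.
by rewrite scalerDr -[c *: r%:P]mul_polyC -polyCM -addrA -polyCD addrC.
Qed.

Lemma e_SS0 n : e 0 n.+2 = B * e 0 n.
Proof.
rewrite /e Sh_SS coefD -scalerAl coefZ coefXM mulr0 add0r mulrDl coefD.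
by rewrite coefCM -scalerAl coefZ coefXM mulr0 addr0.
Qed.

Lemma e_SS k n : e k.+1 n.+2 = a * e k n.+1 + B * e k.+1 n + c * e k n.
Proof.
rewrite /e Sh_SS coefD -scalerAl coefZ coefXM /= mulrDl coefD.
by rewrite coefCM -scalerAl coefZ coefXM /= addrA.
Qed.

Lemma e_0 k : e k 0 = (k == 0%N)%:R.
Proof. by rewrite /e /Sh /W /= -polyC1 comp_polyC polyC1 coef1. Qed.

Lemma e_1 k : e k 1 = if k == 0%N then r else (k == 1%N)%:R.
Proof.
rewrite /e /Sh /W /= comp_polyX coefD coefX coefC.
by case: k => [|[|k]] /=; rewrite ?add0r ?addr0.
Qed.



Definition Eb (k : nat) (x : C) : C :=
  match k with
  | 0 => 1
  | 1 => x * (c + a * r)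
  | 2 => x ^+ 2 * (c ^+ 2 / 2 + a * c * r + a ^+ 2 * B / 2)
         + x * (- c ^+ 2 / 2 + a * B - a * c * r - a ^+ 2 * B / 2)
  | _ => x ^+ 3 * (c ^+ 3 / 6 + a * c ^+ 2 * r / 2 + a ^+ 2 * c * B / 2 + a ^+ 3 * r * B / 6)
         + x ^+ 2 * (- c ^+ 3 / 2 + a * c * B - 3 / 2 * a * c ^+ 2 * r - a ^+ 2 * c * B)
         + x * (c ^+ 3 / 3 - a * c * B + a * c ^+ 2 * r + a ^+ 2 * c * B / 2 - a ^+ 3 * r * B / 6)
  end.

Definition Ob (k : nat) (x : C) : C :=
  match k with
  | 0 => r
  | 1 => x * (c * r + a * B) + B
  | 2 => x ^+ 2 * (c ^+ 2 * r / 2 + a * c * B + a ^+ 2 * r * B / 2)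
         + x * (c * B - c ^+ 2 * r / 2 + a ^+ 2 * r * B / 2)
  | _ => x ^+ 3 * (c ^+ 3 * r / 6 + a * c ^+ 2 * B / 2 + a ^+ 2 * c * r * B / 2 + a ^+ 3 * B ^+ 2 / 6)
         + x ^+ 2 * (c ^+ 2 * B / 2 - c ^+ 3 * r / 2 - a * c ^+ 2 * B / 2 + a ^+ 2 * B ^+ 2 / 2)
         + x * (- c ^+ 2 * B / 2 + c ^+ 3 * r / 3 + a ^+ 2 * B ^+ 2 / 2 - a ^+ 2 * c * r * B / 2 - a ^+ 3 * B ^+ 2 / 6)
  end.

Hypothesis hsr : - d / c < - b / a.
Let B0 : 0 < B.
Proof.
have -> : B = c * (r - (- d / c)) by field; rewrite ?c0.
by rewrite mulr_gt0 // subr_gt0.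
Qed.
Let Bn0 : B != 0. Proof. by rewrite gt_eqF. Qed.

Let Bn0' : c * - b + d * a != 0.
Proof.
have -> : c * - b + d * a = a * B by field; rewrite ?a0.
by rewrite mulf_neq0.
Qed.

Ltac side := rewrite ?Bn0 ?Bn0' ?a0 ?c0 ?pnatr_eq0 //.

Lemma closedE m : forall k, (k < 4)%N ->
  e k m.*2 = B ^+ m * Eb k m%:R / B ^+ k /\
  e k m.*2.+1 = B ^+ m * Ob k m%:R / B ^+ k.
Proof.
elim: m => [|m IH] k hk.
  case: k hk => [|[|[|[|k]]]] // _; rewrite /= e_0 e_1 /=; split; rewrite ?exprS ?expr0; field; side.
have EV : forall k, (k < 4)%N -> e k (m.+1).*2 = B ^+ m.+1 * Eb k m.+1%:R / B ^+ k.
  move=> {hk}k; case: k => [|[|[|[|k]]]] // _; rewrite doubleS.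
  - rewrite e_SS0 (IH 0%N _).1 // /Eb; rewrite ?exprS ?expr0; field; side.
  - rewrite e_SS (IH 0%N _).2 // (IH 0%N _).1 // (IH 1%N _).1 // -natr1 /Eb /Ob; rewrite ?exprS ?expr0; field; side.
  - rewrite e_SS (IH 1%N _).2 // (IH 1%N _).1 // (IH 2%N _).1 // -natr1 /Eb /Ob; rewrite ?exprS ?expr0; field; side.
  - rewrite e_SS (IH 2%N _).2 // (IH 2%N _).1 // (IH 3%N _).1 // -natr1 /Eb /Ob; rewrite ?exprS ?expr0; field; side.
split; first exact: EV.
case: k hk => [|[|[|[|k]]]] // _; rewrite doubleS.
- rewrite e_SS0 (IH 0%N _).2 // /Ob; rewrite ?exprS ?expr0; field; side.
- rewrite e_SS -doubleS (EV 0%N) // (IH 0%N _).2 // (IH 1%N _).2 // -natr1 /Eb /Ob; rewrite ?exprS ?expr0; field; side.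
- rewrite e_SS -doubleS (EV 1%N) // (IH 1%N _).2 // (IH 2%N _).2 // -natr1 /Eb /Ob; rewrite ?exprS ?expr0; field; side.
- rewrite e_SS -doubleS (EV 2%N) // (IH 2%N _).2 // (IH 3%N _).2 // -natr1 /Eb /Ob; rewrite ?exprS ?expr0; field; side.
Qed.

Definition Phi n := e 1 n ^+ 2 * e 2 n + 3 * e 0 n * e 1 n * e 3 n - 4 * e 0 n * e 2 n ^+ 2.
Definition PhiE x := Eb 1 x ^+ 2 * Eb 2 x + 3 * Eb 0 x * Eb 1 x * Eb 3 x - 4 * Eb 0 x * Eb 2 x ^+ 2.
Definition PhiO x := Ob 1 x ^+ 2 * Ob 2 x + 3 * Ob 0 x * Ob 1 x * Ob 3 x - 4 * Ob 0 x * Ob 2 x ^+ 2.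

Lemma PhiE_eq m : Phi m.*2 = (B ^+ m) ^+ 3 / B ^+ 4 * PhiE m%:R.
Proof.
rewrite /Phi /PhiE (proj1 (closedE m (k:=0) isT)) (proj1 (closedE m (k:=1) isT))
  (proj1 (closedE m (k:=2) isT)) (proj1 (closedE m (k:=3) isT)).
rewrite ?exprS ?expr0; field; side.
Qed.

Lemma PhiO_eq m : Phi m.*2.+1 = (B ^+ m) ^+ 3 / B ^+ 4 * PhiO m%:R.
Proof.
rewrite /Phi /PhiO (proj2 (closedE m (k:=0) isT)) (proj2 (closedE m (k:=1) isT))
  (proj2 (closedE m (k:=2) isT)) (proj2 (closedE m (k:=3) isT)).
rewrite ?exprS ?expr0; field; side.
Qed.

Definition q4 (cv Bv : C) := a ^+ 3 * (r ^+ 2 - Bv) * (cv * r + a * Bv).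
Definition q3 (cv Bv : C) := -3 * a^+2 * cv * r * Bv + 1/2 * a^+2 * cv^+2 * Bv + a^+2 * cv^+2 * r^+2
  - 4 * a^+3 * Bv^+2 + a^+3 * r^+2 * Bv + 4 * a^+3 * cv * r * Bv - a^+3 * cv * r^+3
  + 2 * a^+4 * Bv^+2 - 1/2 * a^+4 * r^+2 * Bv.
Definition q2 (cv Bv : C) := a * cv^+2 * Bv - 4 * a^+2 * Bv^+2 + 5 * a^+2 * cv * r * Bv
  - 1/2 * a^+2 * cv^+2 * Bv - a^+2 * cv^+2 * r^+2 + 4 * a^+3 * Bv^+2 - 3 * a^+3 * cv * r * Bv
  - a^+4 * Bv^+2 - 1/2 * a^+4 * r^+2 * Bv.
Definition Q4 (cv Bv : C) := a ^+ 3 * Bv ^+ 2 * (Bv - r ^+ 2) * (cv + a * r).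
Definition Q3 (cv Bv : C) := 3 * a^+2 * cv * Bv^+3 - 2 * a^+2 * cv^+2 * r * Bv^+2
  + 1/2 * a^+2 * cv^+2 * r^+3 * Bv + 3 * a^+3 * r * Bv^+3 - 3 * a^+3 * cv * r^+2 * Bv^+2
  + 1/2 * a^+4 * r * Bv^+3 - 2 * a^+4 * r^+3 * Bv^+2.
Definition Q2 (cv Bv : C) := 3 * a * cv * Bv^+3 - 4 * a * cv^+2 * r * Bv^+2 + a * cv^+3 * r^+2 * Bv
  + 2 * a^+2 * r * Bv^+3 - 3/2 * a^+2 * cv * r^+2 * Bv^+2 + 1/2 * a^+2 * cv^+2 * r^+3 * Bv
  + 5/2 * a^+3 * r * Bv^+3 - 2 * a^+3 * cv * r^+2 * Bv^+2 - 1/2 * a^+4 * r * Bv^+3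
  - a^+4 * r^+3 * Bv^+2.
Definition Q1 (cv Bv : C) := cv * Bv^+3 - 2 * cv^+2 * r * Bv^+2 + cv^+3 * r^+2 * Bv
  + 2 * a^+2 * r * Bv^+3 - 3/2 * a^+2 * cv * r^+2 * Bv^+2 - 1/2 * a^+3 * r * Bv^+3.

Lemma PhiE_poly x : PhiE x = x * (q4 c B * x ^+ 3 + q3 c B * x ^+ 2 + q2 c B * x).
Proof. rewrite /PhiE /Eb /q4 /q3 /q2; field; side. Qed.

Lemma PhiO_poly x : PhiO x = x * (Q4 c B * x ^+ 3 + Q3 c B * x ^+ 2 + Q2 c B * x + Q1 c B).
Proof. rewrite /PhiO /Ob /Q4 /Q3 /Q2 /Q1; field; side. Qed.

Lemma q3_deg : q3 c (r ^+ 2) = 3/2 * a ^+ 2 * r ^+ 2 * (c + a * r) * (c + a * r - 2 * r).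
Proof. rewrite /q3; field; side. Qed.
Lemma Q3_deg : Q3 c (r ^+ 2) = - (3/2) * a ^+ 2 * r ^+ 5 * (c + a * r) * (c + a * r - 2 * r).
Proof. rewrite /Q3; field; side. Qed.
Lemma Q2_deg : Q2 ((2 - a) * r) (r ^+ 2) = - 2 * a * (1 - a) * r ^+ 7.
Proof. rewrite /Q2; field; side. Qed.
Lemma q4_deg : q4 c (r ^+ 2) = 0.
Proof. rewrite /q4; field; side. Qed.
Lemma Q4_deg : Q4 c (r ^+ 2) = 0.
Proof. rewrite /Q4; field; side. Qed.


Lemma W_pos x : x \is Num.real -> r <= x -> forall n, 0 < (W a b c d n).[x].
Proof.
move=> xR hx n; move: n; apply: W_ind.
- by rewrite W0 hornerE ltr01.
- by rewrite W1 hornerX (lt_le_trans r0).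
move=> n h0 h1; rewrite W_horner_SS.
have h2 : 0 <= a * x + b.
  have -> : a * x + b = a * (x - r) by field; rewrite ?a0.
  by apply: mulr_ge0; [exact: ltW | rewrite subr_ge0].
have h3 : 0 < c * x + d.
  have -> : c * x + d = c * (x - r) + B by field; rewrite ?a0.
  by rewrite ltr_wpDl //; apply: mulr_ge0; [exact: ltW | rewrite subr_ge0].
rewrite ltr_wpDl //; first by apply: mulr_ge0 => //; exact: ltW.
exact: mulr_gt0.
Qed.

Lemma Phi_ge0 n : real_rooted (W a b c d n) -> 0 <= Phi n.
Proof.
move=> hrr.
have [rs Hrs] := closed_field_poly_normal (W a b c d n).
set l := lead_coef _ in Hrs.
have Wr : 0 < (W a b c d n).[r] := W_pos rR (lexx r) n.
have Wn0 : W a b c d n != 0.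
  by apply: contraTneq Wr => ->; rewrite horner0 ltxx.
have l0 : l != 0 by rewrite lead_coef_eq0.
have hroots : forall z, z \in rs -> 0 < r - z.
  move=> z hz.
  have rz : root (W a b c d n) z by rewrite Hrs rootZ // root_prod_XsubC.
  have zR := hrr z rz.
  rewrite subr_gt0 real_ltNge //; apply/negP => hle.
  by have := W_pos zR hle n; rewrite (rootP rz) ltxx.
have hSh : Sh n = l *: \prod_(t <- map (fun z => r - z) rs) ('X + t%:P).
  rewrite /Sh {1}Hrs comp_polyZ big_map; congr (_ *: _).
  elim: rs {Hrs hroots} => [|z rs IH]; first by rewrite !big_nil -polyC1 comp_polyC.
  by rewrite !big_cons comp_polyM IH comp_polyB comp_polyX comp_polyC polyCB addrA.
have hts : forall t, t \in map (fun z => r - z) rs -> 0 < t.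
  by move=> t /mapP [z hz ->]; exact: hroots.
have [hQ0 hPhi] := prod_Phi hts.
set Q := \prod_(_ <- _) _ in hSh hQ0 hPhi.
have he : forall k, e k n = l * Q`_k by move=> k; rewrite /e hSh coefZ.
have e0 : e 0 n = (W a b c d n).[r].
  by rewrite /e -horner_coef0 /Sh horner_comp !hornerE.
have lpos : 0 < l by rewrite -(pmulr_lgt0 _ hQ0) -he e0.
have -> : Phi n = l ^+ 3 * PhiQ Q by rewrite /Phi /PhiQ !he; ring.
by apply: mulr_ge0 => //; apply: exprn_ge0; apply: ltW.
Qed.

Local Ltac pos := repeat first [ assumption | done | apply: mulr_gt0
  | apply: exprn_gt0 | rewrite invr_gt0 | rewrite ltr0n ].

Lemma nec : (forall n, real_rooted (W a b c d n)) -> False.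
Proof.
move=> hrr.
have ar0 : 0 < c + a * r by rewrite addr_gt0 // mulr_gt0.
have B0' := B0.
have r0' := r0.
have fac : forall m, 0 < (B ^+ m) ^+ 3 / B ^+ 4.
  by move=> m; rewrite divr_gt0 // exprn_gt0 // exprn_gt0.
have kE : forall m, 0 <= PhiE m%:R.
  move=> m; have := Phi_ge0 (hrr m.*2); rewrite PhiE_eq.
  by rewrite pmulr_rge0.
have kO : forall m, 0 <= PhiO m%:R.
  move=> m; have := Phi_ge0 (hrr m.*2.+1); rewrite PhiO_eq.
  by rewrite pmulr_rge0.
have aR : a \is Num.real by [].
have cR : c \is Num.real by [].
have q4R : forall cv Bv, cv \is Num.real -> Bv \is Num.real -> q4 cv Bv \is Num.real.
  by move=> cv Bv ? ?; rewrite /q4; realt.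
have q3R : forall cv Bv, cv \is Num.real -> Bv \is Num.real -> q3 cv Bv \is Num.real.
  by move=> cv Bv ? ?; rewrite /q3; realt.
have q2R : forall cv Bv, cv \is Num.real -> Bv \is Num.real -> q2 cv Bv \is Num.real.
  by move=> cv Bv ? ?; rewrite /q2; realt.
have Q3R : forall cv Bv, cv \is Num.real -> Bv \is Num.real -> Q3 cv Bv \is Num.real.
  by move=> cv Bv ? ?; rewrite /Q3; realt.
have Q2R : forall cv Bv, cv \is Num.real -> Bv \is Num.real -> Q2 cv Bv \is Num.real.
  by move=> cv Bv ? ?; rewrite /Q2; realt.
have Q1R : forall cv Bv, cv \is Num.real -> Bv \is Num.real -> Q1 cv Bv \is Num.real.
  by move=> cv Bv ? ?; rewrite /Q1; realt.
have XR : r ^+ 2 - B \is Num.real by realt.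
case: (real_ltgtP XR (real0 _)) => hX.
-
  have hq4 : q4 c B < 0.
    have h1 : 0 < c * r + a * B by rewrite addr_gt0 // mulr_gt0.
    have h2 : 0 < a ^+ 3 by exact: exprn_gt0.
    by rewrite /q4 (pmulr_llt0 _ h1) (pmulr_rlt0 _ h2).
  have [n [n0 hn]] := quad_neg hq4 (q3R _ _ cR BR) (q2R _ _ cR BR).
  have := kE n; rewrite PhiE_poly.
  have -> : q4 c B * n%:R ^+ 3 + q3 c B * n%:R ^+ 2 + q2 c B * n%:R =
     n%:R * (q4 c B * n%:R ^+ 2 + q3 c B * n%:R + q2 c B) by ring.
  by rewrite pmulr_rge0 ?ltr0n // pmulr_rge0 ?ltr0n // => /(lt_le_trans hn); rewrite ltxx.
-
  have hQ4 : Q4 c B < 0.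
    have h2 : 0 < a ^+ 3 * B ^+ 2 by rewrite mulr_gt0 // exprn_gt0.
    by rewrite /Q4 (pmulr_llt0 _ ar0) (pmulr_rlt0 _ h2) subr_lt0 -subr_gt0.
  have [n [n0 hn]] := cubic_neg hQ4 (Q3R _ _ cR BR) (Q2R _ _ cR BR) (Q1R _ _ cR BR).
  have := kO n; rewrite PhiO_poly.
  by rewrite pmulr_rge0 ?ltr0n // => /(lt_le_trans hn); rewrite ltxx.
have hB : c * r + d = r ^+ 2 by apply/eqP; rewrite eq_sym -subr_eq0 hX.
have YR : c + a * r - 2 * r \is Num.real by realt.
have r2R : r ^+ 2 \is Num.real by realt.
case: (real_ltgtP YR (real0 _)) => hY.
-
  have hq3 : q3 c (r ^+ 2) < 0.
    have hp : 0 < 3 / 2 * a ^+ 2 * r ^+ 2 * (c + a * r) by pos.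
    by rewrite q3_deg (pmulr_rlt0 _ hp).
  have [n [n0 hn]] := lin_neg hq3 (q2R _ _ cR r2R).
  have := kE n; rewrite PhiE_poly hB q4_deg.
  have -> : 0 * n%:R ^+ 3 + q3 c (r ^+ 2) * n%:R ^+ 2 + q2 c (r ^+ 2) * n%:R =
     n%:R * (q3 c (r ^+ 2) * n%:R + q2 c (r ^+ 2)) by ring.
  by rewrite pmulr_rge0 ?ltr0n // pmulr_rge0 ?ltr0n // => /(lt_le_trans hn); rewrite ltxx.
-
  have hQ3 : Q3 c (r ^+ 2) < 0.
    have hp : 0 < 3 / 2 * a ^+ 2 * r ^+ 5 * (c + a * r) * (c + a * r - 2 * r) by pos.
    rewrite Q3_deg.
    have -> : - (3 / 2) * a ^+ 2 * r ^+ 5 * (c + a * r) * (c + a * r - 2 * r) =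
      - (3 / 2 * a ^+ 2 * r ^+ 5 * (c + a * r) * (c + a * r - 2 * r)) by ring.
    by rewrite oppr_lt0.
  have [n [n0 hn]] := quad_neg hQ3 (Q2R _ _ cR r2R) (Q1R _ _ cR r2R).
  have := kO n; rewrite PhiO_poly hB Q4_deg.
  have -> : 0 * n%:R ^+ 3 + Q3 c (r ^+ 2) * n%:R ^+ 2 + Q2 c (r ^+ 2) * n%:R + Q1 c (r ^+ 2) =
     Q3 c (r ^+ 2) * n%:R ^+ 2 + Q2 c (r ^+ 2) * n%:R + Q1 c (r ^+ 2) by ring.
  by rewrite pmulr_rge0 ?ltr0n // => /(lt_le_trans hn); rewrite ltxx.
have hc' : c = (2 - a) * r by apply/eqP; rewrite -subr_eq0 -hY; apply/eqP; ring.
have rc : r < c.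
  have : r ^+ 2 < c * r.
    rewrite -hB -subr_gt0.
    have -> : c * r - (c * r + d) = - d by ring.
    by rewrite oppr_gt0.
  by rewrite expr2 ltr_pM2r.
have a1 : 0 < 1 - a.
  move: rc; rewrite {1}hc' -subr_gt0.
  have -> : (2 - a) * r - r = (1 - a) * r by ring.
  by rewrite pmulr_lgt0.
have hQ2 : Q2 c (r ^+ 2) < 0.
  have hp : 0 < 2 * a * (1 - a) * r ^+ 7 by pos.
  rewrite [in Q2 c _]hc' Q2_deg.
  have -> : - 2 * a * (1 - a) * r ^+ 7 = - (2 * a * (1 - a) * r ^+ 7) by ring.
  by rewrite oppr_lt0.
have [n [n0 hn]] := lin_neg hQ2 (Q1R _ _ cR r2R).
have hQ30 : Q3 c (r ^+ 2) = 0 by rewrite Q3_deg hY mulr0.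
have := kO n; rewrite PhiO_poly hB Q4_deg hQ30 !mul0r !add0r.
by rewrite pmulr_rge0 ?ltr0n // => /(lt_le_trans hn); rewrite ltxx.
Qed.

End Nec.

Unset Implicit Arguments.

Theorem theorem3p1 (C : archiClosedFieldType) (a b c d : C)
  (ha : a \is Num.real) (hb : b \is Num.real)
  (hc : c \is Num.real) (hd : d \is Num.real)
  (ha0 : 0 < a) (hc0 : 0 < c) (hb0 : b < 0) (hd0 : d < 0) :
  (forall n : nat, real_rooted (W a b c d n)) <-> - b / a <= - d / c.
Proof.
split.
- move=> H.
  have rR : - b / a \is Num.real by apply: realM; rewrite ?realN ?realV.
  have sR : - d / c \is Num.real by apply: realM; rewrite ?realN ?realV.
  rewrite real_leNgt //; apply/negP => hlt.
  exact: (nec ha hb hc hd ha0 hc0 hb0 hd0 hlt H).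
- move=> hrs n.
  exact: (suff_rr ha hb hc hd ha0 hc0 hd0 hrs (n:=n)).
Qed.
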